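(* Let $V$ be a finite set, $p:2^V\to\mathbb{Z}$ a fully supermodular function with $p(\emptyset)=0$, $f,g:V\to\mathbb{Z}$ with $f\le g$, $B=B'(p)$, and suppose $B^{\square}:=B\cap T(f,g)$ contains an integral point. Let $T\subseteq V$. Then there exist a box $T(f',g')\subseteq T(f,g)$ and a subset $X_T\subseteq V$ such that an element $m\in B^{\square}\cap\mathbb{Z}^V$ minimizes $\widetilde m(T)$ over $B^{\square}\cap\mathbb{Z}^V$ if and only if $\widetilde m(X_T)=p(X_T)$ and $m\in B\cap\mathbb{Z}^V\cap T(f',g')$.
   Context: $\widetilde x(Z)=\sum_{v\in Z}x(v)$; $B'(p)=\{x\in\mathbb{R}^V:\widetilde x(V)=p(V),\ \widetilde x(Z)\ge p(Z)\ \forall Z\subset V\}$; $T(f,g)=\{x\in\mathbb{R}^V:f\le x\le g\}$. Fully supermodular: $p(X)+p(Y)\le p(X\cap Y)+p(X\cup Y)$ for all $X,Y\subseteq V$. *)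

(* Defs.v *)
From mathcomp Require Import all_boot all_order all_algebra.
Set Implicit Arguments. Unset Strict Implicit. Unset Printing Implicit Defensive.
Import Order.TTheory GRing.Theory Num.Theory.
Local Open Scope ring_scope.

Definition xsum (V : finType) (x : V -> int) (Z : {set V}) : int :=
  \sum_(v in Z) x v.

Definition fully_supermodular (V : finType) (p : {set V} -> int) : Prop :=
  forall X Y : {set V}, p X + p Y <= p (X :&: Y) + p (X :|: Y).

Definition inBp (V : finType) (p : {set V} -> int) (x : V -> int) : Prop :=
  xsum x setT = p setT /\ (forall Z : {set V}, Z \proper setT -> p Z <= xsum x Z).

Definition inT (V : finType) (f g : V -> int) (x : V -> int) : Prop :=
  forall v, f v <= x v <= g v.

Definition box_sub (V : finType) (f' g' f g : V -> int) : Prop :=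
  forall x : V -> int, inT f' g' x -> inT f g x.

(* Main.v *)
Require Import Defs.
From mathcomp Require Import all_boot all_order all_algebra zify.
From Stdlib Require Import Classical.
Set Implicit Arguments. Unset Strict Implicit. Unset Printing Implicit Defensive.
Import Order.TTheory GRing.Theory Num.Theory.
Local Open Scope ring_scope.

Lemma xsum_split (V : finType) (x : V -> int) A B :
  xsum x A = xsum x (A :&: B) + xsum x (A :\: B).
Proof. by rewrite /xsum (big_setID B). Qed.

Lemma xsum_mod (V : finType) (x : V -> int) A B :
  xsum x A + xsum x B = xsum x (A :&: B) + xsum x (A :|: B).
Proof.
rewrite (xsum_split x (A :|: B) A) (xsum_split x B A).
have -> : (A :|: B) :&: A = A by apply/setP => w; rewrite !inE; do 2 case: (_ \in _).
have -> : (A :|: B) :\: A = B :\: A by apply/setP => w; rewrite !inE; do 2 case: (_ \in _).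
rewrite setIC; lia.
Qed.

Lemma xsum_dec (V : finType) (x : V -> int) Z T :
  xsum x T + xsum x (Z :\: T) = xsum x Z + xsum x (T :\: Z).
Proof. rewrite (xsum_split x T Z) (xsum_split x Z T) setIC; lia. Qed.

Lemma lowb (V : finType) (p : {set V} -> int) x W : inBp p x -> p W <= xsum x W.
Proof.
case=> hT hW; case: (boolP (W \proper setT)) => [/hW //|].
rewrite properT negbK => /eqP ->; by rewrite hT.
Qed.

Lemma xsum_ind (V : finType) (u : V) W :
  xsum (fun w => if w == u then 1 else 0 : int) W = if u \in W then 1 else 0.
Proof.
rewrite /xsum; case: ifP => uW.
  rewrite (bigD1 u) //= eqxx big1 ?addr0 // => i /andP [_ /negbTE ->] //.
by rewrite big1 // => i iW; case: eqP => // e; rewrite e uW in iW.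
Qed.

Lemma xsumD (V : finType) (x e : V -> int) W :
  xsum (fun w => x w + e w) W = xsum x W + xsum e W.
Proof. by rewrite /xsum big_split. Qed.

Lemma xsum0 (V : finType) (x : V -> int) : xsum x set0 = 0.
Proof. by rewrite /xsum big_set0. Qed.

Lemma exists_min (V : finType) (p : {set V} -> int) (f g : V -> int) (T : {set V}) :
  (exists m : V -> int, inBp p m /\ inT f g m) ->
  exists x, inBp p x /\ inT f g x /\
    forall m', inBp p m' -> inT f g m' -> xsum x T <= xsum m' T.
Proof.
move=> [y [hy1 hy2]].
pose lb := xsum f T.
have lbP : forall m, inT f g m -> lb <= xsum m T.
  move=> m hm; rewrite /lb /xsum; apply: ler_sum => i _; by case/andP: (hm i).
suff H : forall n : nat, forall y, inBp p y -> inT f g y -> xsum y T - lb <= n%:Z ->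
  exists x, inBp p x /\ inT f g x /\
    forall m', inBp p m' -> inT f g m' -> xsum x T <= xsum m' T.
  apply: (H `|xsum y T - lb|%N y hy1 hy2).
  rewrite abszE; exact: ler_norm.
elim=> [|n IH] z hz1 hz2 hzn.
- exists z; split=> //; split=> // m' h1 h2.
  have := lbP _ h2; have := lbP _ hz2; lia.
- case: (classic (exists m', inBp p m' /\ inT f g m' /\ xsum m' T < xsum z T)).
    move=> [m' [h1 [h2 h3]]]; apply: (IH m' h1 h2); lia.
  move=> hn; exists z; split=> //; split=> // m' h1 h2.
  rewrite leNgt; apply/negP => h3; apply: hn; exists m'; by [].
Qed.

Lemma tightI (V : finType) (p : {set V} -> int) x X Y :
  fully_supermodular p -> inBp p x ->
  xsum x X == p X -> xsum x Y == p Y ->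
  (xsum x (X :&: Y) == p (X :&: Y)) * (xsum x (X :|: Y) == p (X :|: Y)).
Proof.
move=> hs hx /eqP hX /eqP hY.
have := hs X Y; have := xsum_mod x X Y.
have := lowb (X :&: Y) hx; have := lowb (X :|: Y) hx.
move=> h1 h2 h3 h4; split; apply/eqP; lia.
Qed.

Lemma ar1 (a b : int) : a <= b -> a <= b + 1 - 1. Proof. lia. Qed.
Lemma ar2 (a b : int) : a <= b -> a <= b + 1 - 0. Proof. lia. Qed.
Lemma ar3 (a b : int) : a <= b -> a <= b + 0 - 0. Proof. lia. Qed.
Lemma ar4 (a b : int) : a <= b -> ~~ (b == a) -> a <= b + 0 - 1. Proof. lia. Qed.
Lemma ar5 (a b c : int) : a <= b -> b < c -> a <= b + (1 - 0) <= c. Proof. lia. Qed.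
Lemma ar6 (a b c : int) : a < b -> b <= c -> a <= b + (0 - 1) <= c. Proof. lia. Qed.
Lemma ar7 (a : int) : ~~ (a <= a + 0 - 1). Proof. lia. Qed.

Lemma key (V : finType) (p : {set V} -> int) (f g : V -> int) (T : {set V}) x :
  fully_supermodular p -> p set0 = 0 ->
  inBp p x -> inT f g x ->
  (forall m', inBp p m' -> inT f g m' -> xsum x T <= xsum m' T) ->
  exists Z, xsum x Z = p Z /\ (forall u, u \in Z -> u \notin T -> x u = g u)
     /\ (forall v, v \in T -> v \notin Z -> x v = f v).
Proof.
move=> hs hp0 hx1 hx2 hmin.
pose tight W := xsum x W == p W.
pose A := [set v in T | f v < x v].
pose Z := \bigcap_(W | tight W && (A \subset W)) W.
have tT : tight setT by rewrite /tight; case: hx1 => -> _.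
have t0 : tight set0 by rewrite /tight xsum0 hp0.
have tZ : tight Z.
  apply: (@big_ind _ (fun W => is_true (tight W))).
  - exact: tT.
  - move=> X Y h1 h2; exact: (tightI hs hx1 h1 h2).1.
  - by move=> W /andP [].
have AZ : A \subset Z by apply/bigcapsP => W /andP [].
exists Z; split; first exact/eqP.
split; last first.
  move=> v vT vZ; case/andP: (hx2 v) => h1 h2.
  case: (ltrP (f v) (x v)) => h3; last lia.
  have : v \in A by rewrite inE vT.
  by move/(subsetP AZ); rewrite (negbTE vZ).
move=> u uZ uT; case/andP: (hx2 u) => h1 h2.
case: (ltrP (x u) (g u)) => h3; last lia.
exfalso.
pose F := [set W : {set V} | tight W && (u \notin W)].
pose U := \bigcup_(W in F) W.
have tU : tight U.
  apply: (@big_ind _ (fun W => is_true (tight W))).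
  - exact: t0.
  - move=> X Y h4 h5; exact: (tightI hs hx1 h4 h5).2.
  - by move=> W; rewrite inE => /andP [].
have uU : u \notin U.
  apply/negP => /bigcupP [W]; rewrite inE => /andP [_ /negbTE ->] //.
have AU : A \subset U.
  apply/subsetP => v; rewrite inE => /andP [vT fv].
  have uv : u != v by apply/eqP => e; rewrite e vT in uT.
  case: (classic (exists W, tight W /\ v \in W /\ u \notin W)).
    move=> [W [tW [vW uW]]]; apply/bigcupP; exists W => //.
    by rewrite inE tW uW.
  move=> hn.
  pose e := fun w : V => ((if w == u then 1 else 0) - (if w == v then 1 else 0) : int).
  pose y := fun w => x w + e w.
  have ys : forall W, xsum y W = xsum x W + (if u \in W then 1 else 0) - (if v \in W then 1 else 0).
    move=> W; rewrite /y xsumD /e /xsum sumrB.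
    have := xsum_ind u W; have := xsum_ind v W; rewrite /xsum => -> ->; by rewrite addrA.
  have hy1 : inBp p y.
    split.
      by rewrite ys; case: hx1 => -> _; rewrite !inE /= addrK.
    move=> W _; rewrite ys.
    have hl := lowb W hx1.
    have [vW|vW] := boolP (v \in W); have [uW|uW] := boolP (u \in W);
      rewrite ?vW ?uW ?(negbTE vW) ?(negbTE uW) /=.
    - exact: ar1.
    - case: (boolP (tight W)) => tW.
        by exfalso; apply: hn; exists W; split; [|split].
      exact: ar4.
    - exact: ar2.
    - exact: ar3.
  have hy2 : inT f g y.
    move=> w; rewrite /y /e; case/andP: (hx2 w) => h4 h5.
    case: (eqVneq w u) => [->|wu]; first by rewrite (negbTE uv) /=; apply: ar5.
    case: (eqVneq w v) => [->|wv]; first by apply: (ar6 fv); case/andP: (hx2 v).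
    by rewrite subrr addr0 h4 h5.
  have := hmin y hy1 hy2; rewrite ys (negbTE uT) vT /=; by move/negP: (ar7 (xsum x T)).
have ZU : Z \subset U by apply: bigcap_inf; rewrite tU AU.
by have := subsetP ZU u uZ; rewrite (negbTE uU).
Qed.

Lemma box1 (a b c d y : int) : a <= b -> a <= c -> d <= b -> c <= y <= d -> a <= y <= b.
Proof. lia. Qed.

Lemma ar8 (yT yZT yZ yTZ xT xZT xZ xTZ pZ G F : int) :
  yT + yZT = yZ + yTZ -> xT + xZT = xZ + xTZ -> pZ <= yZ -> yZT <= G -> F <= yTZ ->
  xZ = pZ -> xZT = G -> xTZ = F -> yT <= xT -> [/\ yZ = pZ, yZT = G & yTZ = F].
Proof. move=> *; split; lia. Qed.

Lemma ar9 (yT yZT yZ yTZ mT mZT mZ mTZ pZ G F : int) :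
  yT + yZT = yZ + yTZ -> mT + mZT = mZ + mTZ -> pZ <= yZ -> yZT <= G -> F <= yTZ ->
  mZ = pZ -> mZT = G -> mTZ = F -> mT <= yT.
Proof. lia. Qed.

Lemma sum_pt (V : finType) (a b : V -> int) (A : {set V}) :
  (forall i, i \in A -> a i <= b i) -> xsum a A = xsum b A -> forall i, i \in A -> a i = b i.
Proof.
move=> hle heq i iA.
have H := @psumr_eq0P _ _ (fun j => j \in A) (fun j => b j - a j).
apply/eqP; rewrite eq_sym -subr_eq0; apply/eqP; apply: H => //.
  by move=> j jA; rewrite subr_ge0 hle.
by rewrite sumrB -/(xsum b A) -/(xsum a A) heq subrr.
Qed.

Lemma bnds (V : finType) (p : {set V} -> int) (f g : V -> int) Z T y :
  inBp p y -> inT f g y ->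
  [/\ p Z <= xsum y Z, xsum y (Z :\: T) <= xsum g (Z :\: T) & xsum f (T :\: Z) <= xsum y (T :\: Z)].
Proof.
move=> h1 h2; split; first exact: lowb.
  by apply: ler_sum => i _; case/andP: (h2 i).
by apply: ler_sum => i _; case/andP: (h2 i).
Qed.

Theorem theorem5p10 (V : finType) (p : {set V} -> int) (f g : V -> int)
  (Tset : {set V})
  (hsup : fully_supermodular p) (hp0 : p set0 = 0)
  (hfg : forall v, f v <= g v)
  (hne : exists m : V -> int, inBp p m /\ inT f g m) :
  exists (f' g' : V -> int) (XT : {set V}),
    box_sub f' g' f g /\
    forall m : V -> int, inBp p m -> inT f g m ->
      ((forall m' : V -> int, inBp p m' -> inT f g m' ->
          xsum m Tset <= xsum m' Tset)
       <-> (xsum m XT = p XT /\ inBp p m /\ inT f' g' m)).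
Proof.
have [x [hx1 [hx2 hmin]]] := exists_min Tset hne.
have [Z [hZ [Zg Zf]]] := key hsup hp0 hx1 hx2 hmin.
pose f' := fun v => if (v \in Z) && (v \notin Tset) then g v else f v.
pose g' := fun v => if (v \in Tset) && (v \notin Z) then f v else g v.
have xZT : xsum x (Z :\: Tset) = xsum g (Z :\: Tset).
  by apply: eq_bigr => i; rewrite inE => /andP [iT iZ]; apply: Zg.
have xTZ : xsum x (Tset :\: Z) = xsum f (Tset :\: Z).
  by apply: eq_bigr => i; rewrite inE => /andP [iZ iT]; apply: Zf.
exists f', g', Z; split.
  move=> y hy v; have := hy v; rewrite /f' /g'.
  case: (v \in Z); case: (v \in Tset) => /=; apply: box1; rewrite ?lexx ?hfg //.
move=> m hm1 hm2; split.
- move=> hmm.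
  have [b1 b2 b3] := bnds Z Tset hm1 hm2.
  have [e1 e2 e3] := ar8 (xsum_dec m Z Tset) (xsum_dec x Z Tset) b1 b2 b3 hZ xZT xTZ
                      (hmm x hx1 hx2).
  split=> //; split=> // v.
  have pg := sum_pt (fun i iA => proj2 (andP (hm2 i))) e2.
  have pf := sum_pt (fun i iA => proj1 (andP (hm2 i))) (esym e3).
  rewrite /f' /g'.
  case vZ: (v \in Z); case vT: (v \in Tset) => /=; try exact: hm2.
  + have -> : m v = g v by apply: pg; rewrite inE vZ vT.
    by rewrite lexx.
  + have -> : m v = f v by apply/esym/pf; rewrite inE vZ vT.
    by rewrite lexx.
- move=> [e1 [_ hm3]] m' h1 h2.
  have [b1 b2 b3] := bnds Z Tset h1 h2.
  have e2 : xsum m (Z :\: Tset) = xsum g (Z :\: Tset).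
    apply: eq_bigr => i; rewrite inE => /andP [iT iZ].
    have := hm3 i; have := hm2 i; rewrite /f' iZ iT /=; lia.
  have e3 : xsum m (Tset :\: Z) = xsum f (Tset :\: Z).
    apply: eq_bigr => i; rewrite inE => /andP [iZ iT].
    have := hm3 i; have := hm2 i; rewrite /g' iZ iT /=; lia.
  exact: (ar9 (xsum_dec m' Z Tset) (xsum_dec m Z Tset) b1 b2 b3 e1 e2 e3).
Qed.
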